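(* Assume the bipartite graph $\mathcal{T}$ is a tree of diameter $3$; then $\mathcal{T}$ has exactly two non-leaf nodes, $i_0\in\mathcal{I}$ and $j_0\in\mathcal{J}$. Assume moreover that $\theta_i\le\mu_{ij_0}$ for all $i\in\mathcal{I}$. Then the following nonidling property holds: for every $T>0$, if measurable locally bounded $(\psi,y,z,w)$ satisfy on $[0,T)$ $$\sum_{j\in\mathcal{J}}(\psi_{ij}+\mu_{ij}\mathfrak{J}\psi_{ij})=w_i-y_i-\theta_i\mathfrak{J}y_i\ (i\in\mathcal{I}),\quad \sum_{i\in\mathcal{I}}\psi_{ij}=-z_j\ (j\in\mathcal{J}),\quad y_i,z_j\ge0,\quad \min(e\cdot y,e\cdot z)=0$$ (with $\psi_{ij}=0$ for $i\not\sim j$), and if $w_i(0)>0$ and each $w_i$ is strictly increasing and right-continuous on $[0,T)$, then $z_j(t)=0$ for all $t\in[0,T)$ and $j\in\mathcal{J}$.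
   Context: $\mathcal{I}=\{1,\dots,I\}$, $\mathcal{J}=\{I+1,\dots,I+J\}$, $\mathcal{E}\subset\mathcal{I}\times\mathcal{J}$, $i\sim j$ iff $(i,j)\in\mathcal{E}$; $\mathcal{T}$ is the bipartite graph with vertices $\mathcal{I}\cup\mathcal{J}$ and edges $\mathcal{E}$. Constants $\mu_{ij}>0$ for $(i,j)\in\mathcal{E}$, $\mu_{ij}=0$ otherwise, $\theta_i\ge0$. $\mathfrak{J}f(t)=\int_0^tf(s)ds$, $e=(1,\dots,1)'$. *)

(* Defs.v *)
From HB Require Import structures.
From mathcomp Require Import all_boot all_order all_algebra.
From mathcomp Require Import all_classical all_reals all_analysis.
Set Implicit Arguments. Unset Strict Implicit. Unset Printing Implicit Defensive.
Import Order.TTheory GRing.Theory Num.Theory.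
Import numFieldNormedType.Exports.
Local Open Scope classical_set_scope.
Local Open Scope ring_scope.

(* Vertices of the bipartite graph T: inl i for i in I = 'I_nI,
   inr j for j in J = 'I_nJ.  Edge set E given as a relation on I x J. *)
Definition vtx (nI nJ : nat) := ('I_nI + 'I_nJ)%type.

Definition adj (nI nJ : nat) (E : 'I_nI -> 'I_nJ -> bool) : rel (vtx nI nJ) :=
  fun u v => match u, v with
             | inl i, inr j => E i j
             | inr j, inl i => E i j
             | _, _ => false
             end.

(* a walk from u to v with edge list length size p *)
Definition walk (V : eqType) (e : rel V) (u v : V) (p : seq V) : bool :=
  path e u p && (last u p == v).

Definition connected_graph (V : finType) (e : rel V) : Prop :=
  forall u v : V, exists p, walk e u v p.

Definition acyclic_graph (V : finType) (e : rel V) : Prop :=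
  forall c : seq V, (3 <= size c)%N -> uniq c -> ~~ cycle e c.

Definition is_tree (V : finType) (e : rel V) : Prop :=
  connected_graph e /\ acyclic_graph e.

Definition has_diameter (V : finType) (e : rel V) (d : nat) : Prop :=
  (forall u v : V, exists p, walk e u v p && (size p <= d)%N) /\
  (exists u v : V, (exists p, walk e u v p) /\
     forall p, walk e u v p -> (d <= size p)%N).

Definition degree (V : finType) (e : rel V) (u : V) : nat := #|[set v | e u v]|.

Definition nonleaf (V : finType) (e : rel V) (u : V) : Prop := (1 < degree e u)%N.

Definition Jint (R : realType) (f : R -> R) (t : R) : R :=
  \int[(@lebesgue_measure R)]_(s in `[0, t]) f s.

Definition locally_bounded_on (R : realType) (T : R) (f : R -> R) : Prop :=
  forall t, 0 <= t < T -> exists M : R, forall s, 0 <= s <= t -> `|f s| <= M.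

Definition strictly_increasing_on (R : realType) (T : R) (f : R -> R) : Prop :=
  forall s t, 0 <= s -> s < t -> t < T -> f s < f t.

Definition right_continuous_on (R : realType) (T : R) (f : R -> R) : Prop :=
  forall t, 0 <= t < T -> f x @[x --> t^'+] --> f t.

Definition mlb (R : realType) (T : R) (f : R -> R) : Prop :=
  measurable_fun `[0, T[ f /\ locally_bounded_on T f.

Definition nonidling (R : realType) (nI nJ : nat) (E : 'I_nI -> 'I_nJ -> bool)
  (mu : 'I_nI -> 'I_nJ -> R) (theta : 'I_nI -> R) : Prop :=
  forall T : R, 0 < T ->
  forall (psi : 'I_nI -> 'I_nJ -> R -> R) (y : 'I_nI -> R -> R)
         (z : 'I_nJ -> R -> R) (w : 'I_nI -> R -> R),
    (forall i j, mlb T (psi i j)) -> (forall i, mlb T (y i)) ->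
    (forall j, mlb T (z j)) -> (forall i, mlb T (w i)) ->
    (forall i j t, 0 <= t < T -> ~~ E i j -> psi i j t = 0) ->
    (forall i t, 0 <= t < T ->
       \sum_(j < nJ) (psi i j t + mu i j * Jint (psi i j) t)
         = w i t - y i t - theta i * Jint (y i) t) ->
    (forall j t, 0 <= t < T -> \sum_(i < nI) psi i j t = - z j t) ->
    (forall i t, 0 <= t < T -> 0 <= y i t) ->
    (forall j t, 0 <= t < T -> 0 <= z j t) ->
    (forall t, 0 <= t < T ->
       Num.min (\sum_(i < nI) y i t) (\sum_(j < nJ) z j t) = 0) ->
    (forall i, 0 < w i 0) ->
    (forall i, strictly_increasing_on T (w i)) ->
    (forall i, right_continuous_on T (w i)) ->
    forall t, 0 <= t < T -> forall j, z j t = 0.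

(* Main.v *)
Require Import Defs.
From HB Require Import structures.
From mathcomp Require Import all_boot all_order all_algebra.
From mathcomp Require Import all_classical all_reals all_analysis.
From mathcomp Require Import lra.
Import Order.TTheory GRing.Theory Num.Theory.
Import numFieldNormedType.Exports.
Local Open Scope classical_set_scope.
Local Open Scope ring_scope.
Set Implicit Arguments. Unset Strict Implicit. Unset Printing Implicit Defensive.

Section J.
Variables (R : realType).
Local Notation mu := (@lebesgue_measure R).

Lemma RintegralL (s t a b : R) f g :
  mu.-integrable `]s, t] (EFin \o f) -> mu.-integrable `]s, t] (EFin \o g) ->
  \int[mu]_(x in `]s, t]) (a * f x + b * g x) =
  a * \int[mu]_(x in `]s, t]) f x + b * \int[mu]_(x in `]s, t]) g x.
Proof.
move=> hf hg.
have iZ : forall (c : R) h, mu.-integrable `]s, t] (EFin \o h) ->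
    mu.-integrable `]s, t] (EFin \o (fun r => c * h r)).
  move=> c h hh; have := @integrableZl _ _ _ mu `]s, t] (measurable_itv `]s, t]) c _ hh.
  by apply: eq_integrable => // x _ /=; rewrite EFinM.
rewrite RintegralD //; [|exact: iZ|exact: iZ].
by rewrite RintegralZl // RintegralZl.
Qed.

Lemma J0 (f : R -> R) : Jint f 0 = 0.
Proof. by rewrite /Jint set_itv1 Rintegral_set1. Qed.

Lemma mu_itv_oc (s t : R) : s <= t -> fine (mu `]s, t]) = t - s.
Proof.
move=> st; have := lebesgue_measure_itv `]s, t]%R; rewrite /= => ->.
rewrite lte_fin; have [st'|ts] := ltP s t; first by rewrite -EFinD.
have -> : s = t by apply/eqP; rewrite eq_le st ts.
by rewrite subrr.
Qed.

Lemma int_le (f : R -> R) (c s t : R) : s <= t -> mu.-integrable `]s, t] (EFin \o f) ->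
  (forall r, s < r <= t -> f r <= c) -> \int[mu]_(x in `]s, t]) f x <= c * (t - s).
Proof.
move=> st hf hc.
rewrite -(mu_itv_oc st) -Rintegral_cst //.
apply: le_Rintegral => //.
  apply: measurable_bounded_integrable => //.
  all: try (exists `|c|; split; first by rewrite num_real).
  all: try (by move=> x xc y _; rewrite (le_trans _ (ltW xc))).
  all: try (by have := lebesgue_measure_itv `]s, t]%R; rewrite /= => ->; case: ifP => _; rewrite ?ltry).
all: try (move=> x /=; rewrite in_itv /= => /hc; done).
Qed.

Lemma int_ge (f : R -> R) (c s t : R) : s <= t -> mu.-integrable `]s, t] (EFin \o f) ->
  (forall r, s < r <= t -> c <= f r) -> c * (t - s) <= \int[mu]_(x in `]s, t]) f x.
Proof.
move=> st hf hc.
rewrite -(mu_itv_oc st) -Rintegral_cst //.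
apply: le_Rintegral => //.
  apply: measurable_bounded_integrable => //.
  all: try (exists `|c|; split; first by rewrite num_real).
  all: try (by move=> x xc y _; rewrite (le_trans _ (ltW xc))).
  all: try (by have := lebesgue_measure_itv `]s, t]%R; rewrite /= => ->; case: ifP => _; rewrite ?ltry).
all: try (move=> x /=; rewrite in_itv /= => /hc; done).
Qed.

Lemma int_le2 (f g : R -> R) (a b c s t : R) : s <= t ->
  mu.-integrable `]s, t] (EFin \o f) -> mu.-integrable `]s, t] (EFin \o g) ->
  (forall r, s < r <= t -> a * f r + b * g r <= c) ->
  a * \int[mu]_(x in `]s, t]) f x + b * \int[mu]_(x in `]s, t]) g x <= c * (t - s).
Proof.
move=> st hf hg hc; rewrite -RintegralL //; apply: int_le => //.
have iZ : forall (c : R) h, mu.-integrable `]s, t] (EFin \o h) ->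
    mu.-integrable `]s, t] (EFin \o (fun r => c * h r)).
  move=> c' h hh; have := @integrableZl _ _ _ mu `]s, t] (measurable_itv `]s, t]) c' _ hh.
  by apply: eq_integrable => // x _ /=; rewrite EFinM.
have := @integrableD _ _ _ mu _ (measurable_itv `]s, t]) _ _ (iZ a f hf) (iZ b g hg).
by apply: eq_integrable => // x _ /=; rewrite EFinD.
Qed.

Variables (T : R) (f : R -> R) (hf : mlb T f).

Lemma mlb_int t (A : set R) : 0 <= t -> t < T -> measurable A -> A `<=` `[0, t] ->
  mu.-integrable A (EFin \o f).
Proof.
move=> t0 tT mA At.
have [mf lb] := hf.
apply: measurable_bounded_integrable => //.
- apply: (le_lt_trans (le_measure mu (mem_set mA) (mem_set (measurable_itv `[0, t])) At)).
  have := lebesgue_measure_itv `[0, t]%R; rewrite /= => ->.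
  by case: ifP => _; rewrite ?ltry.
- apply: (measurable_funS _ _ mf) => //.
  move=> x /At/=; rewrite !in_itv/= => /andP[x0 xt].
  by rewrite x0 (le_lt_trans xt tT).
- have [|M hM] := lb t; first by rewrite t0.
  exists M; split; first by rewrite num_real.
  move=> x xM y /At/=; rewrite in_itv/= => yt.
  exact: (le_trans (hM _ yt) (ltW xM)).
Qed.

Lemma mlb_int_oc s t : 0 <= s -> s <= t -> t < T -> mu.-integrable `]s, t] (EFin \o f).
Proof.
move=> s0 st tT; apply: (mlb_int (t := t)) => //.
- exact: le_trans st.
- move=> x /=; rewrite !in_itv/= => /andP[sx ->]; rewrite andbT.
  exact: (le_trans s0 (ltW sx)).
Qed.

Lemma Jincr s t : 0 <= s -> s <= t -> t < T ->
  Jint f t - Jint f s = \int[mu]_(x in `]s, t]) f x.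
Proof.
move=> s0 st tT; rewrite /Jint.
apply: Rintegral_itvB => //.
all: try by rewrite bnd_simp.
apply: (mlb_int (t := t)) => //; first exact: le_trans st.
Qed.

End J.

Section J3.
Variables (R : realType) (T : R).

Lemma Jlip f : mlb T f -> forall t1, 0 <= t1 -> t1 < T -> exists M, 0 <= M /\
  forall s t, 0 <= s -> s <= t -> t <= t1 -> `|Jint f t - Jint f s| <= M * (t - s).
Proof.
move=> hf t1 t10 t1T.
have [|M hM] := hf.2 t1; first by rewrite t10.
have M0 : 0 <= M by apply: le_trans (normr_ge0 (f t1)) (hM t1 _); rewrite t10 lexx.
exists M; split => // s t s0 st tt1.
have tT : t < T by apply: le_lt_trans tt1 t1T.
rewrite (Jincr hf) // ler_norml; apply/andP; split.
- rewrite -mulNr; apply: int_ge => //; first exact: (mlb_int_oc hf).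
  move=> r /andP[sr rt]; rewrite lerNl.
  apply: le_trans (ler_norm _) _; rewrite normrN; apply: hM.
  by rewrite (le_trans s0 (ltW sr)) (le_trans rt tt1).
- apply: int_le => //; first exact: (mlb_int_oc hf).
  move=> r /andP[sr rt].
  apply: le_trans (ler_norm _) _; apply: hM.
  by rewrite (le_trans s0 (ltW sr)) (le_trans rt tt1).
Qed.

End J3.

Section Reals.
Variable R : realType.

Lemma fin_delta (I : finType) (P : I -> R -> Prop) :
  (forall i, exists2 d : R, 0 < d & forall r, 0 <= r -> r < d -> P i r) ->
  exists2 d : R, 0 < d & forall i r, 0 <= r -> r < d -> P i r.
Proof.
move=> h.
have /choice[d hd] : forall i, exists d : R, 0 < d /\ forall r, 0 <= r -> r < d -> P i r.
  by move=> i; have [d d0 hd] := h i; exists d.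
exists (\big[Order.min/1]_i d i).
  by apply: lt_bigmin => // i _; exact: (hd i).1.
move=> i r r0 rd; apply: (hd i).2 => //.
apply: lt_le_trans rd _; exact: bigmin_le.
Qed.

Lemma lim_left (a b C s t : R) : s < t ->
  (forall u, s <= u -> u < t -> a <= b + C * (t - u)) -> a <= b.
Proof.
move=> st h; rewrite leNgt; apply/negP => ba.
set eta := Order.min (t - s) ((a - b) / (`|C| + 1)).
have C1 : 0 < `|C| + 1 by rewrite ltr_wpDl.
have eta0 : 0 < eta by rewrite lt_min subr_gt0 st /= divr_gt0 // subr_gt0.
have etas : eta <= t - s by rewrite ge_min lexx.
have etab : eta <= (a - b) / (`|C| + 1) by rewrite ge_min lexx orbT.
have hs : s <= t - eta by rewrite lerBrDl addrC -lerBrDl.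
have ht : t - eta < t by rewrite ltrBlDl ltrDr.
have := h _ hs ht.
have -> : t - (t - eta) = eta by rewrite opprB addrC subrK.
move=> H.
have H1 : a <= b + `|C| * eta.
  apply: (le_trans H); rewrite lerD2l; apply: ler_wpM2r; [exact: ltW|exact: ler_norm].
have H3 : `|C| * eta < a - b.
  apply: (le_lt_trans (ler_wpM2l (normr_ge0 C) etab)).
  rewrite mulrA ltr_pdivrMr // [X in X < _]mulrC ltr_pM2l ?subr_gt0 //.
  by rewrite ltrDl ltr01.
move: H1; rewrite -lerBlDl => H1.
by move: (le_lt_trans H1 H3); rewrite ltxx.
Qed.

End Reals.

Lemma small_lt (R : realType) (C g : R) : 0 < g -> `|C| * (g / (`|C| + 1)) < g.
Proof.
move=> g0; have C1 : 0 < `|C| + 1 by rewrite ltr_wpDl.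
rewrite mulrA ltr_pdivrMr // [X in X < _]mulrC ltr_pM2l //.
by rewrite ltrDl ltr01.
Qed.

Lemma main2 (R : realType) nI nJ (E : 'I_nI -> 'I_nJ -> bool)
  (mu : 'I_nI -> 'I_nJ -> R) (theta : 'I_nI -> R) (j0 : 'I_nJ)
  (htheta : forall i, 0 <= theta i) (hth : forall i, theta i <= mu i j0)
  (hleaf : forall j i i', j != j0 -> E i j -> E i' j -> i = i') :
  nonidling E mu theta.
Proof.
move=> T T0 psi y z w hpsi hy hz hw hE heq hsum hy0 hz0 hmin hw0 hinc hrc.
pose G i t := \sum_(j < nJ) mu i j * Jint (psi i j) t + theta i * Jint (y i) t.
have eqG : forall i t, 0 <= t < T -> \sum_(j < nJ) psi i j t + y i t = w i t - G i t.
  move=> i t ht; have := heq i t ht; rewrite big_split /= /G => H; lra.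
have final : forall t, 0 <= t < T -> (forall i, G i t < w i t) -> forall j, z j t = 0.
  move=> t ht hG.
  have sz : 0 <= \sum_j z j t by apply: sumr_ge0 => j _; exact: hz0.
  have sy : 0 <= \sum_i y i t by apply: sumr_ge0 => i _; exact: hy0.
  suff hs : \sum_j z j t = 0.
    by move=> j; apply: (psumr_eq0P (fun j _ => hz0 j t ht) hs).
  have := hmin t ht; rewrite minEle; case: ifP => // _ Hy.
  have y0 : forall i, y i t = 0 by move=> i; apply: (psumr_eq0P (fun i _ => hy0 i t ht) Hy).
  have : \sum_j z j t = - \sum_i (w i t - G i t).
    rewrite (eq_bigr (fun j => - \sum_i psi i j t)); last by move=> j _; rewrite hsum // opprK.
    rewrite sumrN exchange_big /=; congr (- _).
    by apply: eq_bigr => i _; rewrite -eqG // y0 addr0.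
  have : 0 <= \sum_i (w i t - G i t) by apply: sumr_ge0 => i _; rewrite subr_ge0 ltW.
  lra.
have psi0 : forall t, 0 <= t < T -> (forall j, z j t = 0) ->
    forall i j, j != j0 -> psi i j t = 0.
  move=> t ht hzt i j jj0; case Eij: (E i j); last by apply: hE => //; rewrite Eij.
  have := hsum j t ht; rewrite hzt oppr0 (bigD1 i) //= big1 ?addr0 // => i' i'i.
  apply: hE => //; apply/negP => Ei'j.
  by move: i'i; rewrite (hleaf j i' i jj0 Ei'j Eij) eqxx.
have winc : forall i s t, 0 <= s -> s <= t -> t < T -> w i s <= w i t.
  move=> i s t s0; rewrite le_eqVlt => /predU1P[-> //|st] tT.
  exact/ltW/hinc.
have Gdiff : forall i s t, G i t - G i s =
    \sum_j mu i j * (Jint (psi i j) t - Jint (psi i j) s)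
    + theta i * (Jint (y i) t - Jint (y i) s).
  move=> i s t; rewrite /G opprD addrACA -sumrB mulrBr; congr (_ + _).
  by apply: eq_bigr => j _; rewrite mulrBr.
have Glip : forall i t1, 0 <= t1 -> t1 < T -> exists C, forall s t,
    0 <= s -> s <= t -> t <= t1 -> `|G i t - G i s| <= C * (t - s).
  move=> i t1 t10 t1T.
  have /choice [M hM] := fun j => Jlip (hpsi i j) t10 t1T.
  have [My [My0 hMy]] := Jlip (hy i) t10 t1T.
  exists (\sum_j `|mu i j| * M j + `|theta i| * My) => s t s0 st tt1.
  rewrite Gdiff; apply: le_trans (ler_normD _ _) _; rewrite mulrDl; apply: lerD.
    apply: le_trans (ler_norm_sum _ _ _) _; rewrite mulr_suml; apply: ler_sum => j _.
    rewrite normrM -mulrA; apply: ler_wpM2l => //; exact: (hM j).2.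
  rewrite normrM -mulrA; apply: ler_wpM2l => //; exact: hMy.
have claim : forall t, 0 <= t < T -> forall i, G i t < w i t.
  move=> t0 ht0 i0; rewrite ltNge; apply/negP => hi0.
  pose F := [set s | (0 <= s < T) /\ exists i, w i s <= G i s].
  have Ft0 : F t0 by split => //; exists i0.
  have neF : F !=set0 by exists t0.
  have lbF : has_lbound F by exists 0 => s [/andP[]].
  pose ts := inf F.
  have F1 : forall s, F s -> ts <= s by move=> s Fs; exact: ge_inf.
  have ts0 : 0 <= ts by apply: lb_le_inf => // s [/andP[]].
  have tsT : ts < T by apply: le_lt_trans (F1 _ Ft0) _; case/andP: ht0.
  have F3 : forall s, 0 <= s -> s < ts -> forall i, G i s < w i s.
    move=> s s0 sts i; rewrite ltNge; apply/negP => H.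
    have : ts <= s by apply: F1; split; [rewrite s0 (lt_trans sts tsT)|exists i].
    by rewrite leNgt sts.
  have [Hall|Hex] := pselect (forall i, G i ts < w i ts).
  -
    have [tst1 t1T] := midf_lt tsT.
    set t1 := (ts + T) / 2 in tst1 t1T.
    have [d d0 hd] : exists2 d : R, 0 < d & forall i r, 0 <= r -> r < d ->
        G i (ts + r) < w i (ts + r).
      apply: fin_delta => i.
      have [C hC] := Glip i t1 (le_trans ts0 (ltW tst1)) t1T.
      have gap : 0 < w i ts - G i ts by rewrite subr_gt0.
      exists (Order.min (t1 - ts) ((w i ts - G i ts) / (`|C| + 1))).
        by rewrite lt_min subr_gt0 tst1 /= divr_gt0 // ltr_wpDl.
      move=> r r0; rewrite lt_min => /andP[rt1 rg].
      have h7 : ts + r <= t1 by rewrite -lerBrDl ltW.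
      have h1 := hC ts (ts + r) ts0 (eq_ind_r is_true r0 (lerDl ts r)) h7.
      have h2 : C * (ts + r - ts) <= `|C| * r.
        by rewrite addrC addKr; apply: ler_wpM2r => //; exact: ler_norm.
      have h3 : `|C| * r <= `|C| * ((w i ts - G i ts) / (`|C| + 1)).
        by apply: ler_wpM2l => //; exact: ltW.
      have h4 := small_lt C gap.
      have h5 : w i ts <= w i (ts + r).
        apply: winc => //; first by rewrite lerDl.
        by apply: lt_trans t1T; rewrite -ltrBrDl.
      have h8 := le_trans (ler_norm _) h1.
      lra.
    have tsd : ts < ts + d by rewrite ltrDl.
    have [s Fs sd] := inf_lt neF tsd.
    have tss := F1 s Fs.
    case: Fs => /andP[s0 sT] [i hi].
    have := hd i (s - ts); rewrite subr_ge0 tss ltrBlDl => /(_ isT sd).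
    by rewrite addrC subrK ltNge hi.
  -
    have [i hi] : exists i, w i ts <= G i ts.
      by move/existsNP: Hex => [i /negP]; rewrite -leNgt => ?; exists i.
    have ts_pos : 0 < ts.
      rewrite lt_neqAle ts0 andbT; apply/negP => /eqP ts0'.
      move: hi; rewrite -ts0' /G J0 big1 ?mulr0 ?addr0; last by move=> j _; rewrite J0 mulr0.
      by rewrite leNgt hw0.
    pose m := mu i j0.
    have m0 : 0 <= m by apply: le_trans (htheta i) (hth i).
    pose W := w i ts.
    pose D s := W - G i s.
    pose del := Order.min ts (2 * (m + 1))^-1.
    have m1 : 0 < 2 * (m + 1) by rewrite mulr_gt0 // ltr_wpDl.
    have del0 : 0 < del by rewrite lt_min ts_pos invr_gt0.
    have delts : del <= ts by rewrite ge_min lexx.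
    have mdel : m * del <= 2^-1.
      apply: le_trans (ler_wpM2l m0 (_ : del <= (2 * (m + 1))^-1)) _.
        by rewrite ge_min lexx orbT.
      have hm : m * (m + 1)^-1 <= 1 by rewrite ler_pdivrMr ?mul1r ?lerDl // ltr_wpDl.
      rewrite invfM mulrCA -[leRHS]mulr1; apply: ler_wpM2l => //.
    pose s0 := ts - del.
    have s00 : 0 <= s0 by rewrite subr_ge0.
    have s0ts : s0 < ts by rewrite ltrBlDl ltrDr.
    pose S := D @` [set s | s0 <= s /\ s < ts].
    have neS : S !=set0 by exists (D s0), s0.
    have [C hC] := Glip i ts ts0 tsT.
    have ubS : has_ubound S.
      exists (W - G i ts + `|C| * ts) => _ [s [s0s sts] <-].
      have s0' : 0 <= s by apply: le_trans s00 s0s.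
      have h1 := le_trans (ler_norm _) (hC s ts s0' (ltW sts) (lexx _)).
      have h2 : C * (ts - s) <= `|C| * ts.
        apply: le_trans (_ : `|C| * (ts - s) <= _).
          by apply: ler_wpM2r; [rewrite subr_ge0 ltW|exact: ler_norm].
        by apply: ler_wpM2l => //; rewrite lerBlDr lerDl.
      rewrite /D; lra.
    pose B := sup S.
    have hB : forall s, s0 <= s -> s < ts -> D s <= B.
      by move=> s ? ?; apply: ub_le_sup => //; exists s.
    have Ds0 : 0 < D s0.
      have := F3 s0 s00 s0ts i; have := winc i s0 ts s00 (ltW s0ts) tsT.
      rewrite /D /W; lra.
    have B0 : 0 < B by apply: lt_le_trans Ds0 (hB _ (lexx _) s0ts).
    have step : forall s, s0 <= s -> s < ts -> D s <= B / 2.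
      move=> s s0s sts.
      have s0' : 0 <= s := le_trans s00 s0s.
      have zr : forall r, 0 <= r -> r < ts -> forall j, z j r = 0.
        move=> r r0 rts; apply: final; first by rewrite r0 (lt_trans rts tsT).
        exact: F3.
      have pj : forall r, 0 <= r -> r < ts -> psi i j0 r + y i r = w i r - G i r.
        move=> r r0 rts; have rT : 0 <= r < T by rewrite r0 (lt_trans rts tsT).
        rewrite -eqG // (bigD1 j0) //= big1 ?addr0 // => j jj0.
        exact: psi0 rT (zr r r0 rts) i j jj0.
      have key : forall u, s <= u -> u < ts -> G i u - G i s <= m * B * (u - s).
        move=> u su uts; have uT : u < T := lt_trans uts tsT.
        rewrite Gdiff (bigD1 j0) //= big1 ?addr0; last first.
          move=> j jj0; rewrite (Jincr (hpsi i j)) //.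
          have hz0' : forall r, s < r <= u -> psi i j r = 0.
            move=> r /andP[sr ru]; have r0 : 0 <= r := le_trans s0' (ltW sr).
            have rts : r < ts := le_lt_trans ru uts.
            apply: (psi0 r _ (zr r r0 rts) i j jj0); by rewrite r0 (lt_trans rts tsT).
          have i1 := mlb_int_oc (hpsi i j) s0' su uT.
          have l1 := @int_le R (psi i j) 0 s u su i1 (fun r hr => eq_ind_r (fun x => x <= 0) (lexx 0) (hz0' r hr)).
          have l2 := @int_ge R (psi i j) 0 s u su i1 (fun r hr => eq_ind_r (fun x => 0 <= x) (lexx 0) (hz0' r hr)).
          move: l1 l2; rewrite !mul0r => l1 l2.
          by have -> := le_anti (introT andP (conj l1 l2)); rewrite mulr0.
        rewrite (Jincr (hpsi i j0)) // (Jincr (hy i)) //.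
        apply: int_le2 => //; [exact: mlb_int_oc|exact: mlb_int_oc|].
        move=> r /andP[sr ru]; have r0 : 0 <= r := le_trans s0' (ltW sr).
        have rts : r < ts := le_lt_trans ru uts.
        have h0 := pj r r0 rts.
        have h1 : theta i * y i r <= m * y i r.
          by apply: ler_wpM2r => //; apply: hy0; rewrite r0 (lt_trans rts tsT).
        have h3 : w i r <= W by apply: winc => //; exact: ltW.
        have h4 := hB r (le_trans s0s (ltW sr)) rts.
        have h2 : m * (psi i j0 r + y i r) <= m * B.
          by apply: ler_wpM2l => //; rewrite h0; move: h3 h4; rewrite /D; lra.
        rewrite mulrDr in h2; rewrite /m in h1 h2 *; lra.
      have mB0 : 0 <= m * B by rewrite mulr_ge0 // ltW.
      have hts : G i ts - G i s <= m * B * (ts - s).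
        apply: (@lim_left _ _ _ C s ts) => // u su uts.
        have := key u su uts.
        have := le_trans (ler_norm _) (hC u ts (le_trans s0' su) (ltW uts) (lexx _)).
        have : m * B * (u - s) <= m * B * (ts - s).
          by apply: ler_wpM2l => //; rewrite lerD2r ltW.
        lra.
      have h1 : m * B * (ts - s) <= m * B * del.
        by apply: ler_wpM2l => //; move: s0s; rewrite /s0; lra.
      have h2 : m * B * del <= B / 2.
        by rewrite [m * B]mulrC -mulrA; apply: ler_wpM2l => //; exact: ltW.
      move: hi; rewrite /D /W; lra.
    have : B <= B / 2 by apply: ge_sup => // _ [s [? ?] <-]; exact: step.
    lra.
move=> t ht; exact: final t ht (claim t ht).
Qed.

Section Core.
Variables (A B : eqType) (F : A -> B -> bool).
Hypothesis N4 : forall a a' b b', a != a' -> b != b' ->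
  F a b -> F a' b -> F a' b' -> F a b' -> False.
Hypothesis N6 : forall a1 a2 a3 b1 b2 b3, a1 != a2 -> a1 != a3 -> a2 != a3 ->
  b1 != b2 -> b1 != b3 -> b2 != b3 ->
  F a1 b1 -> F a2 b1 -> F a2 b2 -> F a3 b2 -> F a3 b3 -> F a1 b3 -> False.
Hypothesis DA : forall a a', a = a' \/ exists b, F a b /\ F a' b.
Hypothesis DB : forall b b', b = b' \/ exists a, F a b /\ F a b'.

Lemma pick_other (b c1 c2 : B) : c1 != c2 -> exists2 c, c != b & (c = c1 \/ c = c2).
Proof.
move=> c12; case: (eqVneq c1 b) => [e|n]; last by exists c1 => //; left.
by exists c2; [rewrite -e eq_sym|right].
Qed.

Lemma core a0 b0 b1 : b0 != b1 -> F a0 b0 -> F a0 b1 ->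
  forall a c1 c2, c1 != c2 -> F a c1 -> F a c2 -> a = a0.
Proof.
move=> b01 F0 F1 a c1 c2 c12 Fc1 Fc2.
case: (eqVneq a a0) => // aa0; exfalso.
case: (DA a a0) => [e|[b [Fab Fa0b]]]; first by rewrite e eqxx in aa0.
have [c cb hc] := pick_other b c12.
have Fac : F a c by case: hc => ->.
have [b'' b''b hb''] := pick_other b b01.
have Fa0b'' : F a0 b'' by case: hb'' => ->.
case: (DB b'' c) => [e|[a' [Fa'b'' Fa'c]]].
  by apply: (N4 aa0 (b' := b'') _ Fab Fa0b Fa0b''); [rewrite eq_sym|rewrite e].
case: (eqVneq a' a) => [ea|na].
  by apply: (N4 aa0 (b' := b'') _ Fab Fa0b Fa0b''); [rewrite eq_sym|rewrite -ea].
case: (eqVneq a' a0) => [ea|na0].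
  by apply: (N4 aa0 (b' := c) _ Fab Fa0b _ Fac); [rewrite eq_sym|rewrite -ea].
case: (eqVneq b'' c) => [e|nbc].
  by apply: (N4 aa0 (b' := b'') _ Fab Fa0b Fa0b''); [rewrite eq_sym|rewrite e].
apply: (N6 (a3 := a') (b2 := b'') (b3 := c) aa0 _ _ _ _ _ Fab Fa0b Fa0b'' Fa'b'' Fa'c Fac).
- by rewrite eq_sym.
- by rewrite eq_sym.
- by rewrite eq_sym.
- by rewrite eq_sym.
- exact: nbc.
Qed.
End Core.

Lemma walk_le3 (V : eqType) (e : rel V) u v p : walk e u v p -> (size p <= 3)%N ->
  u = v \/ e u v \/ (exists x, e u x /\ e x v) \/
  (exists x y, [/\ e u x, e x y & e y v]).
Proof.
rewrite /walk.
case: p => [|a [|b [|c [|d p]]]] //=.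
- by move=> /eqP -> _; left.
- by move=> /andP[]; rewrite andbT => h /eqP <- _; right; left.
- move=> /andP[/andP[h1]]; rewrite andbT => h2 /eqP <- _.
  by right; right; left; exists a.
- move=> /andP[/andP[h1 /andP[h2]]]; rewrite andbT => h3 /eqP <- _.
  by right; right; right; exists a, b.
Qed.

Lemma inl_eq (A B : eqType) (x y : A) : (inl x == inl y :> (A + B)%type) = (x == y).
Proof. by []. Qed.
Lemma inr_eq (A B : eqType) (x y : B) : (inr x == inr y :> (A + B)%type) = (x == y).
Proof. by []. Qed.
Lemma inlr_eq (A B : eqType) (x : A) (y : B) : (inl x == inr y :> (A + B)%type) = false.
Proof. by []. Qed.

Section Graph.
Variables (nI nJ : nat) (E : 'I_nI -> 'I_nJ -> bool).
Hypothesis htree : is_tree (adj E).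
Hypothesis hdist : forall u v : vtx nI nJ, exists p, walk (adj E) u v p && (size p <= 3)%N.

Lemma N4E : forall a a' b b', a != a' -> b != b' ->
  E a b -> E a' b -> E a' b' -> E a b' -> False.
Proof.
move=> a a' b b' aa' bb' h1 h2 h3 h4.
have H := htree.2 [:: inl a; inr b; inl a'; inr b'] isT.
suff U : uniq [:: inl a; inr b; inl a'; inr b'] by move: (H U); rewrite /= h1 h2 h3 h4.
rewrite /= !inE /= andbT !inl_eq !inr_eq !inlr_eq.
by rewrite (negbTE aa') (negbTE bb').
Qed.

Lemma N6E : forall a1 a2 a3 b1 b2 b3, a1 != a2 -> a1 != a3 -> a2 != a3 ->
  b1 != b2 -> b1 != b3 -> b2 != b3 ->
  E a1 b1 -> E a2 b1 -> E a2 b2 -> E a3 b2 -> E a3 b3 -> E a1 b3 -> False.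
Proof.
move=> a1 a2 a3 b1 b2 b3 a12 a13 a23 b12 b13 b23 h1 h2 h3 h4 h5 h6.
have H := htree.2 [:: inl a1; inr b1; inl a2; inr b2; inl a3; inr b3] isT.
suff U : uniq [:: inl a1; inr b1; inl a2; inr b2; inl a3; inr b3].
  by move: (H U); rewrite /= h1 h2 h3 h4 h5 h6.
rewrite /= !inE /= !andbT !inl_eq !inr_eq !inlr_eq.
by rewrite (negbTE a12) (negbTE a13) (negbTE a23) (negbTE b12) (negbTE b13) (negbTE b23).
Qed.
Lemma DAE : forall a a', a = a' \/ exists b, E a b /\ E a' b.
Proof.
move=> a a'; have [p /andP[hw hs]] := hdist (inl a) (inl a').
case: (walk_le3 hw hs) => [[->]|[//|[[x [h1 h2]]|[x [y [h1 h2 h3]]]]]]; first by left.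
- by case: x h1 h2 => // b h1 h2; right; exists b.
- by case: x h1 h2 h3 => // b; case: y => // a'' h1 h2 h3.
Qed.

Lemma DBE : forall b b', b = b' \/ exists a, E a b /\ E a b'.
Proof.
move=> b b'; have [p /andP[hw hs]] := hdist (inr b) (inr b').
case: (walk_le3 hw hs) => [[->]|[//|[[x [h1 h2]]|[x [y [h1 h2 h3]]]]]]; first by left.
- by case: x h1 h2 => // a h1 h2; right; exists a.
- by case: x h1 h2 h3 => // a; case: y => // b'' h1 h2 h3.
Qed.

Lemma coreI : forall a0 b0 b1, b0 != b1 -> E a0 b0 -> E a0 b1 ->
  forall a c1 c2, c1 != c2 -> E a c1 -> E a c2 -> a = a0.
Proof. exact: core N4E N6E DAE DBE. Qed.

Lemma coreJ : forall b0 a0 a1, a0 != a1 -> E a0 b0 -> E a1 b0 ->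
  forall b d1 d2, d1 != d2 -> E d1 b -> E d2 b -> b = b0.
Proof.
apply: (@core _ _ (fun b a => E a b)).
- move=> b b' a a' bb' aa' h1 h2 h3 h4; exact: (N4E aa' bb' h1 h4 h3 h2).
- move=> b1 b2 b3 a1 a2 a3 b12 b13 b23 a12 a13 a23 h1 h2 h3 h4 h5 h6.
  apply: (N6E a12 a13 a23 _ _ _ h2 h3 h4 h5 h6 h1).
  1-3: first [done | by rewrite eq_sym].
  exact: DBE.
exact: DAE.
Qed.

Lemma nbrs_inl i : nonleaf (adj E) (inl i) ->
  exists c1 c2, [/\ c1 != c2, E i c1 & E i c2].
Proof.
rewrite /nonleaf /degree => /card_gt1P [x [y [hx hy xy]]].
rewrite inE in hx; rewrite inE in hy.
case: x hx xy => // c1 hx; case: y hy => // c2 hy xy.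
by exists c1, c2; rewrite inr_eq in xy.
Qed.

Lemma nbrs_inr j : nonleaf (adj E) (inr j) ->
  exists d1 d2, [/\ d1 != d2, E d1 j & E d2 j].
Proof.
rewrite /nonleaf /degree => /card_gt1P [x [y [hx hy xy]]].
rewrite inE in hx; rewrite inE in hy.
case: x hx xy => // d1 hx; case: y hy => // d2 hy xy.
by exists d1, d2; rewrite inl_eq in xy.
Qed.

Lemma nonleaf_inl i c1 c2 : c1 != c2 -> E i c1 -> E i c2 -> nonleaf (adj E) (inl i).
Proof.
move=> c12 h1 h2; apply/card_gt1P; exists (inr c1), (inr c2).
by rewrite !inE /= h1 h2 inr_eq.
Qed.

Lemma nonleaf_inr j d1 d2 : d1 != d2 -> E d1 j -> E d2 j -> nonleaf (adj E) (inr j).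
Proof.
move=> d12 h1 h2; apply/card_gt1P; exists (inl d1), (inl d2).
by rewrite !inE /= h1 h2 inl_eq.
Qed.

Lemma part1_of i0 j0 b b' a a' : b != b' -> E i0 b -> E i0 b' ->
  a != a' -> E a j0 -> E a' j0 ->
  nonleaf (adj E) (inl i0) /\ nonleaf (adj E) (inr j0) /\
  forall v, nonleaf (adj E) v -> v = inl i0 \/ v = inr j0.
Proof.
move=> bb' h1 h2 aa' h3 h4; split; first exact: nonleaf_inl bb' h1 h2.
split; first exact: nonleaf_inr aa' h3 h4.
case=> [i|j].
- move=> /nbrs_inl [c1 [c2 [c12 e1 e2]]]; left.
  by rewrite (coreI bb' h1 h2 c12 e1 e2).
- move=> /nbrs_inr [d1 [d2 [d12 e1 e2]]]; right.
  by rewrite (coreJ aa' h3 h4 d12 e1 e2).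
Qed.

End Graph.

Theorem lemma3 (R : realType) (nI nJ : nat) (E : 'I_nI -> 'I_nJ -> bool)
  (mu : 'I_nI -> 'I_nJ -> R) (theta : 'I_nI -> R)
  (hmuE : forall i j, E i j -> 0 < mu i j)
  (hmu0 : forall i j, ~~ E i j -> mu i j = 0)
  (htheta : forall i, 0 <= theta i)
  (htree : is_tree (adj E))
  (hdiam : has_diameter (adj E) 3) :
  (exists (i0 : 'I_nI) (j0 : 'I_nJ),
     nonleaf (adj E) (inl i0) /\ nonleaf (adj E) (inr j0) /\
     forall v, nonleaf (adj E) v -> v = inl i0 \/ v = inr j0) /\
  (forall j0 : 'I_nJ, nonleaf (adj E) (inr j0) ->
     (forall i, theta i <= mu i j0) ->
     nonidling E mu theta).
Proof.
have hdist := hdiam.1.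
split.
- have [u [v [[p0 hp0] Hm]]] := hdiam.2.
  have [p /andP[hw hs]] := hdist u v.
  case: (walk_le3 hw hs) => [uv|[huv|[[x [h1 h2]]|[x [y [h1 h2 h3]]]]]].
  + by have := Hm [::]; rewrite /walk /= uv eqxx => /(_ isT).
  + by have := Hm [:: v]; rewrite /walk /= huv eqxx => /(_ isT).
  + by have := Hm [:: x; v]; rewrite /walk /= h1 h2 eqxx => /(_ isT).
  + have uy : u != y.
      apply/eqP => e; move: h3; rewrite -e => h3.
      by have := Hm [:: v]; rewrite /walk /= h3 eqxx => /(_ isT).
    have xv : x != v.
      apply/eqP => e; move: h1; rewrite e => h1.
      by have := Hm [:: v]; rewrite /walk /= h1 eqxx => /(_ isT).
    clear hw Hm hp0.
    case: u h1 uy => [a|b] h1 uy; case: x h1 h2 xv => [a1|b1] h1 h2 xv //;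
      case: y h2 h3 uy => [a2|b2] h2 h3 uy //; case: v h3 xv => [a3|b3] h3 xv //.
    * exists a2, b1; apply: (part1_of htree hdist (b := b1) (b' := b3) (a := a) (a' := a2)) => //.
      all: first [by rewrite inr_eq in xv | by rewrite inl_eq in uy | by rewrite inr_eq in uy | by rewrite inl_eq in xv | idtac].
    * exists a1, b2; apply: (part1_of htree hdist (b := b) (b' := b2) (a := a1) (a' := a3)) => //.
      all: first [by rewrite inr_eq in xv | by rewrite inl_eq in uy | by rewrite inr_eq in uy | by rewrite inl_eq in xv | idtac].
- move=> j0 hj0 hth; have [d1 [d2 [d12 e1 e2]]] := nbrs_inr hj0.
  apply: (main2 (j0 := j0)) => // j i i' jj0 Eij Ei'j.
  case: (eqVneq i i') => // ii'; exfalso.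
  have := coreJ htree hdist d12 e1 e2 ii' Eij Ei'j.
  by move=> ejj0; rewrite ejj0 eqxx in jj0.
Qed.
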